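(* Let $\mathcal{H}$ be a finite-dimensional Hilbert space and let $\mathcal{E}$ be a unital quantum channel on $\mathcal{L}(\mathcal{H})$ (i.e. completely positive, trace-preserving, and $\mathcal{E}(I)=I$). Then the following four sets of operators coincide: (1) $MD(\mathcal{E})$; (2) $UCC(\mathcal{E})$; (3) $\mathcal{E}^\dagger(MD(\mathcal{E}^\dagger))$; (4) $\mathcal{E}^\dagger(UCC(\mathcal{E}^\dagger))$.
   Context: $\mathcal{E}^\dagger$ denotes the dual (Heisenberg-picture) map defined by $\mathrm{Tr}(\mathcal{E}(\rho)X)=\mathrm{Tr}(\rho\,\mathcal{E}^\dagger(X))$; if $\mathcal{E}(\rho)=\sum_iE_i\rho E_i^\dagger$ then $\mathcal{E}^\dagger(X)=\sum_iE_i^\dagger XE_i$. For a linear map $\phi$ on $\mathcal{L}(\mathcal{H})$, its multiplicative domain is $MD(\phi)=\{a\in\mathcal{L}(\mathcal{H}):\phi(a)\phi(b)=\phi(ab)\text{ and }\phi(b)\phi(a)=\phi(ba)\text{ for all }b\in\mathcal{L}(\mathcal{H})\}$. For a unital quantum channel $\Phi$ with Kraus operators $\{F_i\}$, $UCC(\Phi):=\{\rho\in\mathcal{L}(\mathcal{H}):\Phi^\dagger\circ\Phi(\rho)=\rho\}=\{\rho:[\rho,F_i^\dagger F_j]=0\text{ for all }i,j\}$. For a set $S$, $\mathcal{E}^\dagger(S)=\{\mathcal{E}^\dagger(s):s\in S\}$. *)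

(* Defs.v *)
(* Operators on an n-dimensional Hilbert space are n x n
   matrices over a numeric algebraically closed field C (e.g. algC);
   a quantum channel is given by a finite family of Kraus operators. *)
From HB Require Import structures.
From mathcomp Require Import all_boot all_order all_algebra.
Set Implicit Arguments. Unset Strict Implicit. Unset Printing Implicit Defensive.
Import Order.TTheory GRing.Theory Num.Theory.
Local Open Scope ring_scope.

Definition adjmx (C : numClosedFieldType) (n : nat) (A : 'M[C]_n) : 'M[C]_n :=
  (map_mx Num.conj A)^T.

Definition kraus_map (C : numClosedFieldType) (n k : nat) (F : 'I_k -> 'M[C]_n)
  (rho : 'M[C]_n) : 'M[C]_n :=
  \sum_(i < k) (F i *m rho *m adjmx (F i)).

Definition kraus_dual (C : numClosedFieldType) (n k : nat) (F : 'I_k -> 'M[C]_n)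
  (X : 'M[C]_n) : 'M[C]_n :=
  \sum_(i < k) (adjmx (F i) *m X *m F i).

(* Kraus family of a trace-preserving (sum F_i^dag F_i = I) and unital
   (sum F_i F_i^dag = I) channel; complete positivity is automatic. *)
Definition unital_channel (C : numClosedFieldType) (n k : nat)
  (F : 'I_k -> 'M[C]_n) : Prop :=
  \sum_(i < k) (adjmx (F i) *m F i) = 1%:M /\
  \sum_(i < k) (F i *m adjmx (F i)) = 1%:M.

Definition MD (C : numClosedFieldType) (n : nat) (phi : 'M[C]_n -> 'M[C]_n)
  (a : 'M[C]_n) : Prop :=
  forall b : 'M[C]_n, phi a *m phi b = phi (a *m b) /\ phi b *m phi a = phi (b *m a).

Definition UCC (C : numClosedFieldType) (n k : nat) (F : 'I_k -> 'M[C]_n)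
  (rho : 'M[C]_n) : Prop :=
  kraus_dual F (kraus_map F rho) = rho.

Definition dual_kraus (C : numClosedFieldType) (n k : nat) (F : 'I_k -> 'M[C]_n)
  : 'I_k -> 'M[C]_n := fun i => adjmx (F i).

Definition image_set (T : Type) (f : T -> T) (S : T -> Prop) (x : T) : Prop :=
  exists s, S s /\ x = f s.

(* Main.v *)
Require Import Defs.
From HB Require Import structures.
From mathcomp Require Import all_boot all_order all_algebra.
Import Order.TTheory GRing.Theory Num.Theory.
Local Open Scope ring_scope.
Section S.
Variable (C : numClosedFieldType) (n : nat).
Local Notation ad := (@adjmx C n).
Lemma adjmxK (A : 'M[C]_n) : ad (ad A) = A.
Proof. by apply/matrixP=> i j; rewrite !mxE conjCK. Qed.
Lemma adjmxM (A B : 'M[C]_n) : ad (A *m B) = ad B *m ad A.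
Proof. by rewrite /adjmx map_mxM trmx_mul. Qed.
Lemma adjmxD (A B : 'M[C]_n) : ad (A + B) = ad A + ad B.
Proof. by apply/matrixP=> i j; rewrite !mxE rmorphD. Qed.
Lemma adjmxB (A B : 'M[C]_n) : ad (A - B) = ad A - ad B.
Proof. by apply/matrixP=> i j; rewrite !mxE rmorphB. Qed.
Lemma adjmx_sum k (G : 'I_k -> 'M[C]_n) : ad (\sum_i G i) = \sum_i ad (G i).
Proof. by apply/matrixP=> i j; rewrite !mxE !summxE rmorph_sum; apply: eq_bigr => l _; rewrite !mxE. Qed.
Lemma tr_adj_eq0 k (X : 'I_k -> 'M[C]_n) :
  \tr (\sum_i ad (X i) *m X i) = 0 -> forall i, X i = 0.
Proof.
rewrite raddf_sum /=.
have H : forall i, \tr (ad (X i) *m X i) = \sum_j \sum_r ((X i r j)^* * X i r j).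
  move=> i; rewrite /mxtrace; apply: eq_bigr => j _; rewrite !mxE.
  by apply: eq_bigr => r _; rewrite !mxE.
under eq_bigr do rewrite H.
have G0 : forall (i : 'I_k) r j, 0 <= (X i r j)^* * X i r j.
  by move=> *; rewrite mulrC mul_conjC_ge0.
move=> H0 i.
have Hi := psumr_eq0P (fun i _ => sumr_ge0 _ (fun j _ => sumr_ge0 _ (fun r _ => G0 i r j))) H0 (i:=i) isT.
apply/matrixP=> r j; rewrite mxE.
have := psumr_eq0P (fun j _ => sumr_ge0 _ (fun r _ => G0 i r j)) Hi (i:=j) isT.
move/(psumr_eq0P (fun r _ => G0 i r j))/(_ r isT)/eqP.
by rewrite mulrC mul_conjC_eq0 => /eqP.
Qed.
Lemma adjmx1 : ad 1%:M = 1%:M.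
Proof. by apply/matrixP=> i j; rewrite !mxE eq_sym; case: (i == j); rewrite ?conjC1 ?conjC0. Qed.

Variables (k : nat) (F : 'I_k -> 'M[C]_n).
Local Notation E := (kraus_map F).
Local Notation D := (kraus_dual F).

Lemma E_adj a : ad (E a) = E (ad a).
Proof.
rewrite /kraus_map adjmx_sum; apply: eq_bigr => i _.
by rewrite !adjmxM adjmxK mulmxA.
Qed.
Lemma D_adj a : ad (D a) = D (ad a).
Proof.
rewrite /kraus_dual adjmx_sum; apply: eq_bigr => i _.
by rewrite !adjmxM adjmxK mulmxA.
Qed.
Lemma tr_E (TP : \sum_i (ad (F i) *m F i) = 1%:M) x : \tr (E x) = \tr x.
Proof.
rewrite /kraus_map raddf_sum /=.
under eq_bigr do rewrite mxtrace_mulC mulmxA.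
by rewrite -raddf_sum /= -mulmx_suml TP mul1mx.
Qed.
Lemma tr_EE a : \tr (ad (E a) *m E a) = \tr (ad a *m D (E a)).
Proof.
rewrite E_adj; set Ea := E a.
rewrite /kraus_map /kraus_dual mulmx_suml mulmx_sumr !raddf_sum /=; apply: eq_bigr => i _.
by rewrite -!mulmxA mxtrace_mulC !mulmxA.
Qed.
Definition Xd a i := a *m ad (F i) - ad (F i) *m E a.
Lemma key (U : \sum_i (F i *m ad (F i)) = 1%:M) a :
  \sum_i (ad (Xd a i) *m Xd a i) = E (ad a *m a) - ad (E a) *m E a.
Proof.
have H : forall i, ad (Xd a i) *m Xd a i =
   F i *m (ad a *m a) *m ad (F i) - (F i *m ad a *m ad (F i)) *m E a
   - ad (E a) *m (F i *m a *m ad (F i)) + ad (E a) *m (F i *m ad (F i)) *m E a.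
  move=> i; rewrite /Xd adjmxB !adjmxM !adjmxK mulmxBl !mulmxBr.
  by rewrite opprB !addrA !mulmxA [LHS]addrAC.
under eq_bigr do rewrite H.
rewrite !big_split /= !sumrN -mulmx_suml -mulmx_sumr -mulmx_suml -mulmx_sumr U mulmx1.
by rewrite -/(E (ad a *m a)) -/(E (ad a)) -E_adj -/(E a) subrK.
Qed.
Hypothesis TP : \sum_i (ad (F i) *m F i) = 1%:M.
Hypothesis U : \sum_i (F i *m ad (F i)) = 1%:M.

Lemma Xzero (a : 'M[C]_n) : \tr (E (ad a *m a) - ad (E a) *m E a) = 0 ->
  forall i, a *m ad (F i) = ad (F i) *m E a.
Proof.
rewrite -key // => /tr_adj_eq0 H i; apply/eqP; rewrite -subr_eq0; apply/eqP.
exact: H.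
Qed.
Lemma UCC_X (a : 'M[C]_n) : UCC F a -> forall i, a *m ad (F i) = ad (F i) *m E a.
Proof.
move=> H; apply: Xzero; rewrite raddfB /= tr_E // tr_EE H subrr //.
Qed.
Lemma UCC_adj (a : 'M[C]_n) : UCC F a -> UCC F (ad a).
Proof. by rewrite /UCC -E_adj -D_adj => ->. Qed.
Lemma sumL (M b : 'M[C]_n) : M *m E b = \sum_i M *m F i *m b *m ad (F i).
Proof. by rewrite /kraus_map mulmx_sumr; apply: eq_bigr => i _; rewrite !mulmxA. Qed.
Lemma sumR (M b : 'M[C]_n) : E b *m M = \sum_i F i *m b *m ad (F i) *m M.
Proof. by rewrite /kraus_map mulmx_suml. Qed.

Lemma core (a : 'M[C]_n) : MD E a <-> UCC F a.
Proof.
split.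
  move=> /(_ (ad a)) [_ H].
  have Hx : forall i, a *m ad (F i) = ad (F i) *m E a.
    by apply: Xzero; rewrite -H E_adj subrr linear0.
  rewrite /UCC /kraus_dual.
  under eq_bigr do rewrite -Hx -mulmxA.
  by rewrite -mulmx_sumr TP mulmx1.
move=> H b.
have h1 := UCC_X a H.
have h2 : forall i, F i *m a = E a *m F i.
  move=> i; have := UCC_X (ad a) (UCC_adj a H) i.
  by move/(congr1 ad); rewrite !adjmxM !adjmxK -E_adj adjmxK.
split.
  rewrite sumL /kraus_map; apply: eq_bigr => i _.
  by rewrite -h2 !mulmxA.
rewrite sumR /kraus_map; apply: eq_bigr => i _.
by rewrite -!mulmxA -h1 !mulmxA.
Qed.
End S.

Lemma MD_ext (C : numClosedFieldType) n (phi psi : 'M[C]_n -> 'M[C]_n) a :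
  (forall x, phi x = psi x) -> MD phi a <-> MD psi a.
Proof. by move=> h; split=> H b; [rewrite -!h; exact: H | rewrite !h; exact: H]. Qed.

Theorem theorem6 (C : numClosedFieldType) (n k : nat) (F : 'I_k -> 'M[C]_n) :
  unital_channel F ->
  forall a : 'M[C]_n,
    (MD (kraus_map F) a <-> UCC F a) /\
    (UCC F a <-> image_set (kraus_dual F) (MD (kraus_dual F)) a) /\
    (image_set (kraus_dual F) (MD (kraus_dual F)) a <->
     image_set (kraus_dual F) (UCC (dual_kraus F)) a).
Proof.
move=> [TP U] a.
have hD : forall x, kraus_map (dual_kraus F) x = kraus_dual F x.
  by move=> x; rewrite /kraus_map /kraus_dual; apply: eq_bigr => i _; rewrite /dual_kraus adjmxK.
have hD2 : forall x, kraus_dual (dual_kraus F) x = kraus_map F x.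
  by move=> x; rewrite /kraus_map /kraus_dual; apply: eq_bigr => i _; rewrite /dual_kraus adjmxK.
have TP' : \sum_i (adjmx (dual_kraus F i) *m dual_kraus F i) = 1%:M.
  by rewrite -U; apply: eq_bigr => i _; rewrite /dual_kraus adjmxK.
have U' : \sum_i (dual_kraus F i *m adjmx (dual_kraus F i)) = 1%:M.
  by rewrite -TP; apply: eq_bigr => i _; rewrite /dual_kraus adjmxK.
have h34 : image_set (kraus_dual F) (MD (kraus_dual F)) a <->
     image_set (kraus_dual F) (UCC (dual_kraus F)) a.
  split=> -[s [Hs ->]]; exists s; split=> //.
    by apply/(core _ _ _ _ TP' U' s); apply/(MD_ext _ _ _ _ s hD).
  by apply/(MD_ext _ _ _ _ s hD); apply/(core _ _ _ _ TP' U' s).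
have h24 : UCC F a <-> image_set (kraus_dual F) (UCC (dual_kraus F)) a.
  split.
    move=> H; exists (kraus_map F a); split; last by rewrite H.
    by rewrite /UCC hD hD2 H.
  move=> [s [Hs ->]]; move: Hs; rewrite /UCC hD hD2 => Hs.
  by rewrite Hs.
split; first exact: core.
split=> //; split=> H; [apply/h34; exact/h24 | apply/h24; exact/h34].
Qed.
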